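(* Let $\Gamma=(\mathcal{M},K)$ be a $d$-dimensional grid and let $\sigma$ be an outmap on $\Gamma$ with $\sigma(p)\cap p=\emptyset$ for every vertex $p$. Let $\Gamma'$ and $\Gamma''$ be two nonempty induced subgrids of $\Gamma$ with disjoint vertex sets, such that the union of their vertex sets is the vertex set of a nonempty induced subgrid $\Gamma'\cup\Gamma''$ of $\Gamma$. Let $x$ be the unique sink of $\Gamma'$ and $y$ the unique sink of $\Gamma''$ (with respect to the restricted outmaps). Then either (a) one of $x$, $y$ is the unique sink of $\Gamma'\cup\Gamma''$, or (b) $\sigma$ is not a unique sink orientation of $\Gamma$, and $\Gamma$ with $\sigma$ admits a violation of type (GUV1) or (GUV2) defined below.
   Context: Grid: let $n,d$ be positive integers, $\mathcal{M}=\{1,\dots,n\}$ (the directions), and $K=(\kappa_1,\dots,\kappa_d)$ a partition of $\mathcal{M}$ into ordered sets with $|\kappa_i|\ge 2$. The grid $\Gamma=(\mathcal{M},K)$ is the undirected graph with vertex set $V=\{p\subseteq\mathcal{M} : |p\cap\kappa_i|=1 \text{ for } i=1,\dots,d\}$ and edge set $\{\{p,q\}: p,q\in V,\ |p\oplus q|=2\}$ ($\oplus$ = symmetric difference). An outmap is a function $\sigma:V\to\mathcal{P}(\mathcal{M})$; $\sigma(p)$ is the set of directions in which $p$ has outgoing edges (edges of $p$ in other directions are incoming). A nonempty induced subgrid is given by $\mathcal{M}'\subseteq\mathcal{M}$ with $\mathcal{M}'\cap\kappa_i\neq\emptyset$ for all $i$; its vertices are $V'=\{p\subseteq\mathcal{M}':|p\cap\kappa_i|=1\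 \forall i\}$, its edges are those of $\Gamma$ between vertices of $V'$, and its restricted outmap is $\sigma'(p)=\sigma(p)\cap\mathcal{M}'$. A sink of a subgrid is a vertex $p$ with $\sigma'(p)=\emptyset$. $\sigma$ is a unique sink orientation (USO) if every nonempty induced subgrid has a unique sink. The refined index of an outmap $\sigma'$ on subgrid $(\mathcal{M}',K')$ is $r_{\sigma'}(p)=(|\sigma'(p)\cap\kappa'_1|,\dots,|\sigma'(p)\cap\kappa'_d|)$. Violations: (GUV1) a vertex $p$ with $p\cap\sigma(p)\neq\emptyset$; (GUV2) an induced subgrid $(\mathcal{M}',K')$ with restricted outmap $\sigma'$ and two distinct vertices $p\neq q$ of it with $r_{\sigma'}(p)=r_{\sigma'}(q)$. *)

(* Defs.v *)
From mathcomp Require Import all_boot.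
Set Implicit Arguments. Unset Strict Implicit. Unset Printing Implicit Defensive.

(* Directions M = 'I_n.  The partition K = (kappa_1,...,kappa_d) is encoded by
   a block-assignment function blk : 'I_n -> 'I_d; kappa_i = block blk i. *)
Definition block (n d : nat) (blk : 'I_n -> 'I_d) (i : 'I_d) : {set 'I_n} :=
  [set m | blk m == i].

Definition grid_ok (n d : nat) (blk : 'I_n -> 'I_d) : Prop :=
  forall i : 'I_d, 2 <= #|block blk i|.

Definition subgrid (n d : nat) (blk : 'I_n -> 'I_d) (M' : {set 'I_n}) : bool :=
  [forall i : 'I_d, M' :&: block blk i != set0].

Definition vertex_of (n d : nat) (blk : 'I_n -> 'I_d) (M' p : {set 'I_n}) : bool :=
  (p \subset M') && [forall i : 'I_d, #|p :&: (M' :&: block blk i)| == 1].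

Definition vertex (n d : nat) (blk : 'I_n -> 'I_d) (p : {set 'I_n}) : bool :=
  vertex_of blk setT p.

(* outmaps: sigma : {set 'I_n} -> {set 'I_n}; only its values on vertices matter. *)

(* p is a sink of the subgrid M' for the restricted outmap sigma'(p) = sigma p :&: M' *)
Definition is_sink (n d : nat) (blk : 'I_n -> 'I_d) (sigma : {set 'I_n} -> {set 'I_n})
  (M' p : {set 'I_n}) : bool :=
  vertex_of blk M' p && (sigma p :&: M' == set0).

Definition unique_sink (n d : nat) (blk : 'I_n -> 'I_d) (sigma : {set 'I_n} -> {set 'I_n})
  (M' p : {set 'I_n}) : Prop :=
  is_sink blk sigma M' p /\ forall q, is_sink blk sigma M' q -> q = p.

Definition USO (n d : nat) (blk : 'I_n -> 'I_d) (sigma : {set 'I_n} -> {set 'I_n}) : Prop :=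
  forall M' : {set 'I_n}, subgrid blk M' -> exists p, unique_sink blk sigma M' p.

Definition refined_index (n d : nat) (blk : 'I_n -> 'I_d) (sigma : {set 'I_n} -> {set 'I_n})
  (M' p : {set 'I_n}) : 'I_d -> nat :=
  fun i => #|(sigma p :&: M') :&: (M' :&: block blk i)|.

Definition GUV1 (n d : nat) (blk : 'I_n -> 'I_d) (sigma : {set 'I_n} -> {set 'I_n}) : Prop :=
  exists p, vertex blk p /\ p :&: sigma p != set0.

Definition GUV2 (n d : nat) (blk : 'I_n -> 'I_d) (sigma : {set 'I_n} -> {set 'I_n}) : Prop :=
  exists M' p q, [/\ subgrid blk M', vertex_of blk M' p, vertex_of blk M' q, p != q &
    forall i, refined_index blk sigma M' p i = refined_index blk sigma M' q i].

(* Main.v *)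
Require Import Defs.
From mathcomp Require Import all_boot.
Set Implicit Arguments. Unset Strict Implicit. Unset Printing Implicit Defensive.

Lemma vert_sub n d (blk : 'I_n -> 'I_d) M p : vertex_of blk M p -> p \subset M.
Proof. by case/andP. Qed.

Lemma vert_full n d (blk : 'I_n -> 'I_d) M p : vertex_of blk M p -> vertex blk p.
Proof.
case/andP=> sub /forallP H; apply/andP; split; first exact: subsetT.
apply/forallP=> i; rewrite -(eqP (H i)); apply/eqP; apply: eq_card => m.
rewrite !inE; case mp: (m \in p) => //=.
by rewrite (subsetP sub _ mp).
Qed.

Lemma Pf_in n d (blk : 'I_n -> 'I_d) M (f : 'I_d -> 'I_n) i :
  (forall i, f i \in M :&: block blk i) ->
  f i \in [set m | m == f (blk m)].
Proof.
move=> H; have := H i; rewrite !inE => /andP[_ /eqP ->]; by [].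
Qed.

Lemma Pf_vertex n d (blk : 'I_n -> 'I_d) M (f : 'I_d -> 'I_n) :
  (forall i, f i \in M :&: block blk i) ->
  vertex_of blk M [set m | m == f (blk m)].
Proof.
move=> H; apply/andP; split.
  apply/subsetP=> m; rewrite inE => /eqP ->.
  by have := H (blk m); rewrite inE => /andP[].
apply/forallP=> i; apply/eqP; rewrite -(cards1 (f i)); apply: eq_card => m.
rewrite !inE; apply/idP/idP.
  by case/and3P=> /eqP E _ /eqP B; rewrite -B; apply/eqP.
move/eqP=> ->; have := H i; rewrite !inE => /andP[-> /eqP ->].
by rewrite !eqxx.
Qed.

Lemma sub_M n d (blk : 'I_n -> 'I_d) M1 M3 :
  subgrid blk M1 -> (forall p, vertex_of blk M1 p -> vertex_of blk M3 p) ->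
  M1 \subset M3.
Proof.
move=> /forallP sg H; apply/subsetP=> m mM1.
pose f i := if i == blk m then m else odflt m [pick x in M1 :&: block blk i].
have Hf i : f i \in M1 :&: block blk i.
  rewrite /f; case: eqP => [->|_]; first by rewrite !inE mM1 eqxx.
  case: pickP => [x Hx //|H0].
  by move: (sg i); rewrite -card_gt0 (eq_card0 H0).
have := H _ (Pf_vertex Hf) => /vert_sub/subsetP; apply.
by rewrite inE /f eqxx.
Qed.
Lemma ri_lt n d (blk : 'I_n -> 'I_d) (sigma : {set 'I_n} -> {set 'I_n}) M p i :
  sigma p :&: p = set0 -> vertex_of blk M p ->
  refined_index blk sigma M p i < #|M :&: block blk i|.
Proof.
move=> Hs /andP[_ /forallP H]; rewrite /refined_index.
have /cards1P[m Hm] := H i.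
have mp : m \in p :&: (M :&: block blk i) by rewrite Hm set11.
apply: proper_card; apply/properP; split.
  by apply/subsetP=> x /setIP[_].
exists m; first by move: mp; rewrite inE => /andP[].
rewrite !inE; apply/negP=> /andP[/andP[ms _] _].
move: mp; rewrite inE => /andP[mp _].
have : m \in sigma p :&: p by rewrite inE ms mp.
by rewrite Hs inE.
Qed.

Lemma ri0 n d (blk : 'I_n -> 'I_d) (sigma : {set 'I_n} -> {set 'I_n}) M p :
  (forall i, refined_index blk sigma M p i = 0) -> sigma p :&: M = set0.
Proof.
move=> H; apply/eqP; rewrite -subset0; apply/subsetP=> m Hm.
have /eqP := H (blk m); rewrite /refined_index cards_eq0 => /eqP/setP/(_ m).
move: Hm; rewrite !inE => /andP[-> ->]; by rewrite eqxx.
Qed.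

Lemma count_sink n d (blk : 'I_n -> 'I_d) (sigma : {set 'I_n} -> {set 'I_n}) M :
  0 < n -> (forall p, vertex blk p -> sigma p :&: p = set0) -> subgrid blk M ->
  (forall p q, vertex_of blk M p -> vertex_of blk M q ->
     (forall i, refined_index blk sigma M p i = refined_index blk sigma M q i) -> p = q) ->
  exists z, is_sink blk sigma M z.
Proof.
move=> n0 Hs /forallP sg Hinj.
pose x0 := Ordinal n0.
pose A i := M :&: block blk i.
pose V := [set p | vertex_of blk M p].
pose R := [set r : {ffun 'I_d -> 'I_n} | [forall i, r i < #|A i|]].
pose idx p : {ffun 'I_d -> 'I_n} := [ffun i => insubd x0 (refined_index blk sigma M p i)].
pose fr (r : {ffun 'I_d -> 'I_n}) i := nth x0 (enum (A i)) (r i).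
pose g r := [set m | m == fr r (blk m)].
have Hfr r i : r \in R -> fr r i \in A i.
  rewrite inE => /forallP/(_ i) ri; rewrite -mem_enum; apply: mem_nth.
  by rewrite -cardE.
have HgV r : r \in R -> g r \in V.
  by move=> rR; rewrite inE; apply: Pf_vertex => i; apply: Hfr.
have ginj : {in R &, injective g}.
  move=> r1 r2 r1R r2R E; apply/ffunP=> i; apply: val_inj.
  have := Pf_in i (fun i => Hfr r1 i r1R); rewrite -/(g r1) E inE.
  have := Hfr r1 i r1R; rewrite !inE => /andP[_ /eqP ->].
  rewrite /fr nth_uniq ?enum_uniq // -?cardE.
  - by move/eqP.
  - by move: r1R; rewrite inE => /forallP.
  - by move: r2R; rewrite inE => /forallP.
have ri_n p i : vertex_of blk M p -> refined_index blk sigma M p i < n.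
  move=> vp; apply: (leq_trans (ri_lt i (Hs _ (vert_full vp)) vp)).
  by apply: leq_trans (max_card _) _; rewrite card_ord.
have idxE p i : vertex_of blk M p -> val (idx p i) = refined_index blk sigma M p i.
  by move=> vp; rewrite ffunE val_insubd ri_n.
have idxinj : {in V &, injective idx}.
  move=> p q; rewrite !inE => vp vq E; apply: Hinj => // i.
  by rewrite -idxE // -idxE // E.
have idxR : idx @: V \subset R.
  apply/subsetP=> r /imsetP[p]; rewrite inE => vp ->.
  rewrite inE; apply/forallP=> i; rewrite idxE //.
  exact: ri_lt (Hs _ (vert_full vp)) vp.
have cR : #|R| <= #|V|.
  rewrite -(card_in_imset ginj); apply: subset_leq_card.
  by apply/subsetP=> s /imsetP[r rR ->]; apply: HgV.
have EVR : idx @: V = R.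
  apply/eqP; rewrite eqEcard idxR /= (card_in_imset idxinj) //.
have : [ffun=> x0] \in R.
  rewrite inE; apply/forallP=> i; rewrite ffunE /= card_gt0; exact: sg.
rewrite -EVR => /imsetP[z]; rewrite inE => vz Ez.
exists z; apply/andP; split => //; apply/eqP; apply: (@ri0 n d blk) => i.
by rewrite -(idxE z i vz) -Ez ffunE.
Qed.

Lemma sink_ri n d (blk : 'I_n -> 'I_d) (sigma : {set 'I_n} -> {set 'I_n}) M p i :
  is_sink blk sigma M p -> refined_index blk sigma M p i = 0.
Proof. by case/andP=> _ /eqP E; rewrite /refined_index E set0I cards0. Qed.

From Stdlib Require Import Classical.

Theorem lemma6p3p5 (n d : nat) (blk : 'I_n -> 'I_d)
  (sigma : {set 'I_n} -> {set 'I_n})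
  (M1 M2 M3 x y : {set 'I_n}) :
  0 < n -> 0 < d -> grid_ok blk ->
  (forall p, vertex blk p -> sigma p :&: p = set0) ->
  subgrid blk M1 -> subgrid blk M2 -> subgrid blk M3 ->
  (forall p, ~~ (vertex_of blk M1 p && vertex_of blk M2 p)) ->
  (forall p, vertex_of blk M3 p = vertex_of blk M1 p || vertex_of blk M2 p) ->
  unique_sink blk sigma M1 x -> unique_sink blk sigma M2 y ->
  (unique_sink blk sigma M3 x \/ unique_sink blk sigma M3 y) \/
  (~ USO blk sigma /\ (GUV1 blk sigma \/ GUV2 blk sigma)).
Proof.
move=> n0 d0 gok Hs sg1 sg2 sg3 disj V3 [sx ux] [sy uy].
have s13 : M1 \subset M3 by apply: (sub_M sg1) => p vp; rewrite V3 vp.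
have s23 : M2 \subset M3 by apply: (sub_M sg2) => p vp; rewrite V3 vp orbT.
have key z : is_sink blk sigma M3 z -> z = x \/ z = y.
  case/andP; rewrite V3 => /orP[] vz /eqP E.
    left; apply: ux; rewrite /is_sink vz /=; rewrite -subset0 -E.
    by apply: setIS.
  right; apply: uy; rewrite /is_sink vz /=; rewrite -subset0 -E.
  by apply: setIS.
case: (classic (exists z, unique_sink blk sigma M3 z)) => [[z [sz uz]]|nz].
  by left; case: (key z sz) => <-; [left|right].
right; split.
  by move=> uso; apply: nz; apply: uso.
right; apply: NNPP => nG; apply: nz.
have Hinj p q : vertex_of blk M3 p -> vertex_of blk M3 q ->
    (forall i, refined_index blk sigma M3 p i = refined_index blk sigma M3 q i) -> p = q.
  move=> vp vq E; apply: NNPP => npq; apply: nG.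
  by exists M3, p, q; split => //; apply/eqP.
have [z sz] := count_sink n0 Hs sg3 Hinj.
exists z; split => // q sq; apply: Hinj.
- by case/andP: sq.
- by case/andP: sz.
- by move=> i; rewrite !sink_ri.
Qed.
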